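(* Let $n=2k$ with $k\ge1$, and let $$W(X_1,\dots,X_n)=\sum_{j=1}^nX_j+\sum_{j=1}^n\frac1{X_j}+\prod_{j=1}^nX_j+\prod_{j=1}^n\frac1{X_j}$$ on $(\mathbb{C}^* )^n$. Then every critical point of $W$ in $(\mathbb{C}^* )^n$ is non-degenerate, i.e. the Hessian matrix $(\partial^2W/\partial X_j\partial X_k)$ is invertible at every point where $\nabla W=0$.
   Context: $W$ is the superpotential $\sum_{v\in\mathrm{vert}(P)}x^v$ of the del Pezzo polytope $P^k_{dP}\subset\mathbb{R}^{2k}$. This polytope is the convex hull of $\pm e_1,\dots,\pm e_{2k}$ and $\pm(e_1+\dots+e_{2k})$, and it is the polytope associated with the del Pezzo toric variety $V_k$. *)

(* Defs.v *)
From HB Require Import structures.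
From mathcomp Require Import all_boot all_order all_algebra.
Set Implicit Arguments. Unset Strict Implicit. Unset Printing Implicit Defensive.
Import Order.TTheory GRing.Theory Num.Theory.
Local Open Scope ring_scope.

(* Laurent polynomials in n variables over R, represented as a finite list of
   terms (coefficient, exponent vector); the term (c, v) stands for c * x^v. *)
Definition laurent (R : Type) (n : nat) := seq (R * {ffun 'I_n -> int}).

Definition leval (R : unitRingType) (n : nat) (p : laurent R n) (x : 'I_n -> R) : R :=
  \sum_(t <- p) t.1 * \prod_(i < n) (x i) ^ (t.2 i).

Definition lderiv (R : unitRingType) (n : nat) (j : 'I_n) (p : laurent R n) : laurent R n :=
  [seq (t.1 * (t.2 j)%:~R, [ffun i => t.2 i - (if i == j then 1 else 0)] : {ffun 'I_n -> int}) | t : R * {ffun 'I_n -> int} <- p].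

Definition evec (n : nat) (j : 'I_n) : {ffun 'I_n -> int} :=
  [ffun i => if i == j then 1 else 0].
Definition cvec (n : nat) (c : int) : {ffun 'I_n -> int} := [ffun _ => c].

Definition W (R : unitRingType) (n : nat) : laurent R n :=
  [seq (1, evec j) | j <- enum 'I_n]
  ++ [seq (1, [ffun i => - evec j i]) | j <- enum 'I_n]
  ++ [:: (1, cvec n 1); (1, cvec n (-1))].

Definition lgrad (R : unitRingType) (n : nat) (p : laurent R n) (x : 'I_n -> R) (j : 'I_n) : R :=
  leval (lderiv j p) x.
Definition lhessian (R : unitRingType) (n : nat) (p : laurent R n) (x : 'I_n -> R) : 'M[R]_n :=
  \matrix_(j, l) leval (lderiv l (lderiv j p)) x.

(* Main.v *)
Require Import Defs.
From HB Require Import structures.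
From mathcomp Require Import all_boot all_order all_algebra.
From mathcomp Require Import ring lra zify.
Import Order.TTheory GRing.Theory Num.Theory.
Set Implicit Arguments. Unset Strict Implicit. Unset Printing Implicit Defensive.
Local Open Scope ring_scope.

Section Eval.
Variables (F : fieldType) (n : nat) (x : 'I_n -> F).
Hypothesis xnz : forall i, x i != 0.

Definition mono (v : {ffun 'I_n -> int}) := \prod_(i < n) x i ^ v i.

Lemma prod_shift (v : 'I_n -> int) j :
  \prod_(i < n) x i ^ (v i - (if i == j then 1 else 0)) = (\prod_(i < n) x i ^ v i) * (x j)^-1.
Proof.
rewrite (eq_bigr (fun i => x i ^ v i * (if i == j then (x j)^-1 else 1))); last first.
  move=> i _; case: eqP => [->|_]; last by rewrite subr0 mulr1.
  by rewrite expfzDr // exprN1.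
by rewrite big_split /= -big_mkcond /= big_pred1_eq.
Qed.

Lemma leval_d j (p : laurent F n) :
  leval (lderiv j p) x = \sum_(t <- p) t.1 * (t.2 j)%:~R * mono t.2 * (x j)^-1.
Proof.
rewrite /leval /lderiv big_map; apply: eq_bigr => t _ /=.
under eq_bigr => i _ do rewrite ffunE.
by rewrite prod_shift mulrA.
Qed.

Lemma leval_dd j l (p : laurent F n) :
  leval (lderiv l (lderiv j p)) x = \sum_(t <- p) t.1 * (t.2 j)%:~R * (t.2 l - (if l == j then 1 else 0))%:~R * mono t.2 * (x j)^-1 * (x l)^-1.
Proof.
rewrite leval_d /lderiv big_map; apply: eq_bigr => t _ /=.
rewrite ffunE /mono.
under eq_bigr => i _ do rewrite ffunE.
by rewrite prod_shift !mulrA.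
Qed.

Lemma prod_single (f : 'I_n -> int) i : (forall m, m != i -> f m = 0) ->
  \prod_(m < n) x m ^ f m = x i ^ f i.
Proof.
move=> hf; rewrite (bigD1 i) //= big1 ?mulr1 // => m hm; by rewrite hf // expr0z.
Qed.


Definition P := \prod_(i < n) x i.

Lemma mono_evec i : mono (evec i) = x i.
Proof. rewrite /mono (@prod_single _ i) ?ffunE ?eqxx ?expr1z // => m hm; by rewrite ffunE (negbTE hm). Qed.
Lemma mono_nevec i : mono [ffun m => - evec i m] = (x i)^-1.
Proof. rewrite /mono (@prod_single _ i) ?ffunE ?eqxx ?exprN1 // => m hm; by rewrite !ffunE (negbTE hm) oppr0. Qed.
Lemma mono_c1 : mono (cvec n 1) = P.
Proof. by rewrite /mono /P; apply: eq_bigr => i _; rewrite ffunE expr1z. Qed.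
Lemma mono_cN1 : mono (cvec n (-1)) = P^-1.
Proof. by rewrite /mono /P -prodfV; apply: eq_bigr => i _; rewrite ffunE exprN1. Qed.

Lemma grad_W j : lgrad (W F n) x j =
  1 - (x j)^-1 * (x j)^-1 + (P - P^-1) * (x j)^-1.
Proof.
rewrite /lgrad leval_d /W !big_cat !big_map big_cons big_cons big_nil /=.
rewrite (bigD1 j) //= big1 => [|i hij]; last by rewrite ffunE eq_sym (negbTE hij) mulr0z mulr0 !mul0r.
rewrite (bigD1 j) //= big1 => [|i hij]; last by rewrite ffunE ffunE eq_sym (negbTE hij) oppr0 mulr0z mulr0 !mul0r.
rewrite !ffunE eqxx mono_evec mono_nevec mono_c1 mono_cN1 /=.
rewrite ?(mulrNz, mulr1z) !mul1r mulfV //; ring.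
Qed.

Lemma Pnz : P != 0.
Proof. by apply/prodf_neq0 => i _; apply: xnz. Qed.

Lemma hess_W j l : leval (lderiv l (lderiv j (W F n))) x =
  (x j)^-1 * (x l)^-1 * ((l == j)%:R * (2 * (x j)^-1 - P + P^-1) + (P + P^-1)).
Proof.
rewrite leval_dd /W !big_cat !big_map big_cons big_cons big_nil /=.
rewrite (bigD1 j) //= big1 => [|i hij]; last by rewrite ffunE eq_sym (negbTE hij) mulr0z mulr0 !mul0r.
rewrite (bigD1 j) //= big1 => [|i hij]; last by rewrite ffunE ffunE eq_sym (negbTE hij) oppr0 mulr0z mulr0 !mul0r.
rewrite !ffunE eqxx mono_evec mono_nevec mono_c1 mono_cN1 /=.
case: (eqVneq l j) => [->|hlj]; rewrite ?eqxx.
    rewrite !(intrD, intrN, mulrNz, mulr1z) /=. field. by rewrite Pnz xnz.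
rewrite !(intrD, intrN, mulrNz, mulr1z, mulr0z) /=. field. by rewrite Pnz !xnz.
Qed.
End Eval.

Lemma parity (k : nat) (e : 'I_(2 * k) -> int) : (forall l, e l = 1 \/ e l = -1) ->
  exists N : int, \sum_l e l = 2 * N.
Proof.
move=> he.
exists (\sum_l (if e l == 1 then 1 else 0) - k%:Z).
rewrite mulrBr mulr_sumr.
have -> : (2 * k%:Z) = \sum_(l < 2 * k) (1 : int).
  rewrite sumr_const card_ord -mulr_natl mulr1 natrM. by rewrite [k%:R]natz.
rewrite -sumrB; apply: eq_bigr => l _.
by case: (he l) => ->.
Qed.

Theorem mainTheorem6 (C : numClosedFieldType) (k : nat) (hk : (1 <= k)%N)
  (x : 'I_(2 * k) -> C) :
  (forall i, x i != 0) ->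
  (forall j, lgrad (W C (2 * k)) x j = 0) ->
  lhessian (W C (2 * k)) x \in unitmx.
Proof.
move=> hx hg.
set n := (2 * k)%N in x hx hg *.
have Pnz' := Pnz hx.
set p := P x in Pnz'.
set c := p^-1 - p.
set s := p + p^-1.
have hc : forall j, x j - (x j)^-1 = c.
  move=> j; have := hg j; rewrite (grad_W hx) -/p => h.
  have e : x j - (x j)^-1 - c = x j * (1 - (x j)^-1 * (x j)^-1 + (p - p^-1) * (x j)^-1).
    by rewrite /c; field; rewrite ?hx.
  by apply/eqP; rewrite -subr_eq0 e h mulr0.
set d := fun j => x j + (x j)^-1.
have hd2 : forall j, d j ^+ 2 = c ^+ 2 + 4.
  by move=> j; rewrite -(hc j) /d; field; rewrite ?hx.
have hs2 : s ^+ 2 = c ^+ 2 + 4 by rewrite /s /c; field.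
have n0 : (0 < n)%N by rewrite /n muln_gt0 hk.
set i0 : 'I_n := Ordinal n0.
set t := d i0.
have sq : forall a b : C, a ^+ 2 = b ^+ 2 -> a = b \/ a = - b.
  move=> a b /eqP; rewrite -subr_eq0 subr_sqr mulf_eq0 subr_eq0 addr_eq0.
  by case/orP => /eqP ->; [left|right].
have hdl : forall l, d l = t \/ d l = - t by move=> l; apply: sq; rewrite hd2 hd2.
have hst : s = t \/ s = - t by apply: sq; rewrite hs2 hd2.
have ht : t != 0.
  apply/negP => /eqP t0.
  have hd0 : forall l, d l = 0 by move=> l; case: (hdl l) => ->; rewrite t0 ?oppr0.
  have hxl : forall l, x l = c / 2.
    move=> l; have h0 := hd0 l; rewrite /d in h0; rewrite -(hc l).
    have e : (x l)^-1 = - x l by apply/eqP; rewrite -addr_eq0 addrC; apply/eqP.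
    by rewrite e opprK; field; rewrite ?pnatr_eq0.
  have ha2 : (c / 2) ^+ 2 = -1.
    have h0 := hd0 i0; rewrite /d in h0.
    have e : x i0 * (x i0 + (x i0)^-1) = x i0 ^+ 2 + 1 by field; rewrite ?hx.
    rewrite -(hxl i0); apply/eqP; rewrite -subr_eq0 opprK -e h0 mulr0 //.
  have hp : p = (-1) ^+ k.
    by rewrite /p /P (eq_bigr (fun _ => c / 2)) // prodr_const card_ord /n exprM ha2.
  have hp2 : p * p = 1 by rewrite hp -expr2 sqrr_sign.
  have hc0 : p * c = 0 by rewrite /c mulrBr mulfV // hp2 subrr.
  have c0 : c = 0 by move/eqP: hc0; rewrite mulf_eq0 (negbTE Pnz') /= => /eqP.
  by move: (hx i0); rewrite hxl c0 mul0r eqxx.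
rewrite unitmxE unitfE; apply/negP => /det0P [v vnz hv].
set w := fun j => v 0 j * (x j)^-1.
set S := \sum_j w j.
have hH : forall j l, lhessian (W C n) x j l = (x j)^-1 * (x l)^-1 * ((l == j)%:R * d j + s).
  move=> j l; rewrite /lhessian mxE (hess_W hx) -/p.
  have e := hc j; rewrite /c in e.
  have ex : d j = 2 * (x j)^-1 - p + p^-1 by rewrite /d -{1}(subrK (x j)^-1 (x j)) e; ring.
  by rewrite ex.
have key : forall l, w l * d l = - (s * S).
  move=> l; have := hv; move/matrixP/(_ 0 l); rewrite !mxE => h.
  have h2 : \sum_j v 0 j * lhessian (W C n) x j l =
      (x l)^-1 * (\sum_j (l == j)%:R * (w j * d j) + s * S).
    rewrite /S mulr_sumr -big_split mulr_sumr; apply: eq_bigr => j _ /=.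
    rewrite hH /w; ring.
  have h3 : \sum_j (l == j)%:R * (w j * d j) = w l * d l.
    rewrite (bigD1 l) //= eqxx mul1r big1 ?addr0 // => j hj.
    by rewrite eq_sym (negbTE hj) mul0r.
  move: h; rewrite h2 h3; move/eqP; rewrite mulf_eq0 invr_eq0 (negbTE (hx l)) /= addr_eq0.
  by move/eqP.
set e := fun l => if d l == t then (1 : int) else -1.
have hde : forall l, d l = (e l)%:~R * t.
  move=> l; rewrite /e; case: eqP => [->|ne]; first by rewrite mulr1z mul1r.
  by rewrite mulrNz mulr1z mulN1r; case: (hdl l).
have [N hN] : exists N : int, \sum_l e l = 2 * N.
  by apply: parity => l; rewrite /e; case: eqP; [left|right].
have sumd : \sum_l d l = (2 * N)%:~R * t.
  by rewrite (eq_bigr _ (fun l _ => hde l)) -mulr_suml -hN raddf_sum.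
have hsum : S * t ^+ 2 = - (s * S) * ((2 * N)%:~R * t).
  rewrite -sumd; transitivity (\sum_l w l * t ^+ 2); first by rewrite /S mulr_suml.
  rewrite mulr_sumr; apply: eq_bigr => l _.
  have -> : t ^+ 2 = d l ^+ 2 by rewrite hd2 hd2.
  by rewrite -(key l); ring.
have S0 : S = 0.
  have nz : forall z : int, (1 + (2 * z)%:~R : C) != 0.
    move=> z; rewrite -[X in X + _](mulr1z (1 : C)) -intrD intr_eq0; lia.
  have t2 : t ^+ 2 != 0 by rewrite expf_neq0.
  case: hst => hs; rewrite hs in hsum.
  - have : S * (t ^+ 2 * (1 + (2 * N)%:~R)) = 0.
      transitivity (S * t ^+ 2 - - (t * S) * ((2 * N)%:~R * t)); first ring.
      by rewrite hsum subrr.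
    by move/eqP; rewrite mulf_eq0 [_ * _ == 0]mulf_eq0 (negbTE t2) (negbTE (nz N)) /= orbF => /eqP.
  - have : S * (t ^+ 2 * (1 + (2 * - N)%:~R)) = 0.
      rewrite mulrN intrN.
      transitivity (S * t ^+ 2 - - (- t * S) * ((2 * N)%:~R * t)); first ring.
      by rewrite hsum subrr.
    by move/eqP; rewrite mulf_eq0 [_ * _ == 0]mulf_eq0 (negbTE t2) (negbTE (nz (- N))) /= orbF => /eqP.
case/negP: vnz; apply/eqP/rowP => l; rewrite mxE.
have hdl0 : d l != 0 by case: (hdl l) => ->; rewrite ?oppr_eq0.
have := key l; rewrite S0 mulr0 oppr0 => /eqP; rewrite mulf_eq0 (negbTE hdl0) orbF /w.
rewrite mulf_eq0 invr_eq0 (negbTE (hx l)) orbF => /eqP.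
by [].
Qed.
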